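(* For all $\Sigma\subseteq\mathsf{FOR}$ and $\varphi\in\mathsf{FOR}$: $\Sigma\vdash_{\mathcal{F}N}\varphi$ if and only if $\Sigma\vDash_{\mathsf{R}^n}\varphi$, where $\mathsf{R}^n$ is the set of Epstein relations $\mathfrak{R}$ such that for all $\varphi,\psi$, $\langle\neg\varphi,\psi\rangle\in\mathfrak{R}$ implies $\langle\varphi,\psi\rangle\in\mathfrak{R}$.
   Context: Language: propositional letters $\Phi=\{p_0,p_1,\dots\}$; connectives $\neg$, $\lor,\wedge,\to,\leftrightarrow,\vartriangle,\looparrowright$; $\mathsf{FOR}$ the set of all formulas. An Epstein model is $\langle v,\mathfrak{R}\rangle$ with $v:\Phi\to\{0,1\}$ and $\mathfrak{R}\subseteq\mathsf{FOR}^2$ (an Epstein relation); truth: letters via $v$, boolean connectives classical, $\langle v,\mathfrak{R}\rangle\vDash\varphi\vartriangle\psi$ iff both true and $\langle\varphi,\psi\rangle\in\mathfrak{R}$; $\langle v,\mathfrak{R}\rangle\vDash\varphi\looparrowright\psi$ iff $\varphi\to\psi$ true and $\langle\varphi,\psi\rangle\in\mathfrak{R}$. For a set $\mathsf{R}$ of relations, $\Sigma\vDash_{\mathsf{R}}\varphi$ iff for every $\mathfrak{R}\in\mathsf{R}$ and every valuation $v$, if $\langle v,\mathfrak{R}\rangle$ satisfies all of $\Sigma$ then it satisfies $\varphi$. $\mathcal{F}$ is the least set containing all classical tautologies of the language and the axioms $(p\looparrowright q)\to(p\to q)$ and $(p\vartriangle q)\leftrightarrow((p\looparrowright q)\wedge(p\wedge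 q))$, closed under uniform substitution and modus ponens. $\mathcal{F}N$ is the least set containing $\mathcal{F}$ and the axioms $(n1)\ (\neg p\looparrowright q)\to((p\looparrowright q)\lor\neg(p\to q))$ and $(n2)\ ((\neg\neg p\looparrowright q)\wedge\neg(\neg p\to q))\to(p\looparrowright q)$ ($p,q$ distinct letters), closed under uniform substitution and modus ponens. $\Sigma\vdash_{\mathcal{F}N}\varphi$ iff there is a finite sequence ending in $\varphi$ each member of which is in $\mathcal{F}N\cup\Sigma$ or follows from two earlier members by modus ponens. *)

(* Defs.v *)
From Stdlib Require Import List Arith.
Import ListNotations.

Inductive form : Type :=
| Var  : nat -> form
| Neg  : form -> form
| Or   : form -> form -> form
| And  : form -> form -> form
| Imp  : form -> form -> form
| Iff  : form -> form -> form
| Tri  : form -> form -> form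
| Loop : form -> form -> form.

Definition erel := form -> form -> Prop.

Fixpoint sat (v : nat -> bool) (R : erel) (f : form) : Prop :=
  match f with
  | Var n => v n = true
  | Neg a => ~ sat v R a
  | Or a b => sat v R a \/ sat v R b
  | And a b => sat v R a /\ sat v R b
  | Imp a b => sat v R a -> sat v R b
  | Iff a b => (sat v R a <-> sat v R b)
  | Tri a b => sat v R a /\ sat v R b /\ R a b
  | Loop a b => (sat v R a -> sat v R b) /\ R a b
  end.

Definition sem_cons (RR : erel -> Prop) (Sigma : form -> Prop) (phi : form) : Prop :=
  forall (R : erel) (v : nat -> bool),
    RR R -> (forall s, Sigma s -> sat v R s) -> sat v R phi.

Definition Rn (R : erel) : Prop := forall a b, R (Neg a) b -> R a b.

Fixpoint ceval (w : form -> bool) (f : form) : bool :=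
  match f with
  | Var _ => w f
  | Neg a => negb (ceval w a)
  | Or a b => ceval w a || ceval w b
  | And a b => ceval w a && ceval w b
  | Imp a b => implb (ceval w a) (ceval w b)
  | Iff a b => Bool.eqb (ceval w a) (ceval w b)
  | Tri _ _ => w f
  | Loop _ _ => w f
  end.

Definition tautology (f : form) : Prop := forall w, ceval w f = true.

Fixpoint subst (s : nat -> form) (f : form) : form :=
  match f with
  | Var n => s n
  | Neg a => Neg (subst s a)
  | Or a b => Or (subst s a) (subst s b)
  | And a b => And (subst s a) (subst s b)
  | Imp a b => Imp (subst s a) (subst s b)
  | Iff a b => Iff (subst s a) (subst s b)
  | Tri a b => Tri (subst s a) (subst s b)
  | Loop a b => Loop (subst s a) (subst s b)
  end.

Definition p := Var 0.
Definition q := Var 1.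

Definition axF1 := Imp (Loop p q) (Imp p q).
Definition axF2 := Iff (Tri p q) (And (Loop p q) (And p q)).
Definition axN1 := Imp (Loop (Neg p) q) (Or (Loop p q) (Neg (Imp p q))).
Definition axN2 := Imp (And (Loop (Neg (Neg p)) q) (Neg (Imp (Neg p) q))) (Loop p q).

Inductive FN : form -> Prop :=
| FN_taut : forall f, tautology f -> FN f
| FN_F1 : FN axF1
| FN_F2 : FN axF2
| FN_N1 : FN axN1
| FN_N2 : FN axN2
| FN_subst : forall s f, FN f -> FN (subst s f)
| FN_mp : forall f g, FN (Imp f g) -> FN f -> FN g.

Definition derives (Sigma : form -> Prop) (phi : form) : Prop :=
  exists l : list form,
    l <> [] /\ last l (Var 0) = phi /\
    forall i, i < length l ->
      FN (nth i l (Var 0)) \/ Sigma (nth i l (Var 0)) \/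
      exists j k, j < i /\ k < i /\
        nth j l (Var 0) = Imp (nth k l (Var 0)) (nth i l (Var 0)).

(* Main.v *)
Require Import Defs.
From Stdlib Require Import List Arith Lia Classical ClassicalEpsilon Bool Cantor.
Import ListNotations.

Definition bdec (P : Prop) : bool :=
  if excluded_middle_informative P then true else false.

Lemma bdec_true P : bdec P = true <-> P.
Proof. unfold bdec; destruct (excluded_middle_informative P); split; intros; auto; discriminate. Qed.

Lemma sat_ceval v R f :
  sat v R f <-> ceval (fun g => bdec (sat v R g)) f = true.
Proof.
  induction f; simpl.
  - rewrite bdec_true; simpl; tauto.
  - rewrite IHf; destruct (ceval _ f); simpl; intuition congruence.
  - rewrite IHf1, IHf2, orb_true_iff; tauto.
  - rewrite IHf1, IHf2, andb_true_iff; tauto.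
  - rewrite IHf1, IHf2; destruct (ceval _ f1), (ceval _ f2); simpl; intuition congruence.
  - rewrite IHf1, IHf2; destruct (ceval _ f1), (ceval _ f2); simpl; intuition congruence.
  - rewrite bdec_true; simpl; tauto.
  - rewrite bdec_true; simpl; tauto.
Qed.

Lemma sat_subst v R s f :
  sat v R (subst s f) <->
  sat (fun n => bdec (sat v R (s n))) (fun a b => R (subst s a) (subst s b)) f.
Proof.
  induction f; simpl.
  - rewrite bdec_true; tauto.
  - rewrite IHf; tauto.
  - rewrite IHf1, IHf2; tauto.
  - rewrite IHf1, IHf2; tauto.
  - rewrite IHf1, IHf2; tauto.
  - rewrite IHf1, IHf2; tauto.
  - rewrite IHf1, IHf2; tauto.
  - rewrite IHf1, IHf2; tauto.
Qed.

Lemma FN_valid f : FN f -> forall v R, Rn R -> sat v R f.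
Proof.
  induction 1; intros v R HR.
  - apply sat_ceval; apply H.
  - unfold axF1; simpl; tauto.
  - unfold axF2; simpl; tauto.
  - unfold axN1; simpl. intros [H1 H2].
    destruct (classic (sat v R p)).
    + destruct (classic (sat v R q)); [left; split; auto|right; tauto].
    + left; split; [tauto| apply HR; auto].
  - unfold axN2; simpl. intros [[H1 H2] H3].
    split; [intros; exfalso; apply H3; intros; contradiction|].
    apply HR, HR, H2.
  - apply sat_subst. apply IHFN. intros a b H0. apply (HR (subst s a)), H0.
  - simpl in IHFN1. apply IHFN1; auto.
Qed.

Inductive D (S : form -> Prop) : form -> Prop :=
| D_fn : forall f, FN f -> D S f
| D_hyp : forall f, S f -> D S f
| D_mp : forall f g, D S (Imp f g) -> D S f -> D S g.

Lemma D_sound S f : D S f -> sem_cons Rn S f.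
Proof.
  induction 1; intros R v HR HS.
  - apply FN_valid; auto.
  - auto.
  - apply (IHD1 R v HR HS), IHD2; auto.
Qed.

Definition P_at (S : form -> Prop) (l : list form) (i : nat) : Prop :=
  FN (nth i l (Var 0)) \/ S (nth i l (Var 0)) \/
  exists j k, j < i /\ k < i /\
    nth j l (Var 0) = Imp (nth k l (Var 0)) (nth i l (Var 0)).

Definition valid S l := forall i, i < length l -> P_at S l i.

Lemma last_nth_eq (l : list form) d : l <> [] -> last l d = nth (length l - 1) l d.
Proof.
  intros H. pose proof (app_removelast_last d H) as E.
  remember (last l d) as x. remember (removelast l) as r. rewrite E.
  rewrite length_app, app_nth2; simpl; [|lia].
  replace (length r + 1 - 1 - length r) with 0 by lia.
  reflexivity.
Qed.

Lemma derives_D S phi : derives S phi -> D S phi.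
Proof.
  intros [l [Hne [Hlast Hv]]].
  assert (Hall : forall i, i < length l -> D S (nth i l (Var 0))).
  { intro i. induction i as [i IH] using (well_founded_induction lt_wf).
    intros Hi. destruct (Hv i Hi) as [H|[H|[j [k [Hj [Hk He]]]]]].
    - now apply D_fn.
    - now apply D_hyp.
    - apply (D_mp _ (nth k l (Var 0))).
      + rewrite <- He. apply IH; lia.
      + apply IH; lia. }
  rewrite <- Hlast, last_nth_eq by auto. apply Hall.
  destruct l; [congruence|simpl; lia].
Qed.

Lemma valid_app S l1 l2 : valid S l1 -> valid S l2 -> valid S (l1 ++ l2).
Proof.
  intros H1 H2 i Hi. rewrite length_app in Hi.
  destruct (Nat.lt_ge_cases i (length l1)) as [Hl|Hl].
  - destruct (H1 i Hl) as [H|[H|[j [k [Hj [Hk He]]]]]]; unfold P_at.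
    + left; now rewrite app_nth1.
    + right; left; now rewrite app_nth1.
    + right; right; exists j, k. rewrite !app_nth1 by lia. auto.
  - destruct (H2 (i - length l1)) as [H|[H|[j [k [Hj [Hk He]]]]]]; [lia| |  |]; unfold P_at.
    + left; now rewrite app_nth2.
    + right; left; now rewrite app_nth2.
    + right; right; exists (length l1 + j), (length l1 + k).
      rewrite !app_nth2 by lia.
      replace (length l1 + j - length l1) with j by lia.
      replace (length l1 + k - length l1) with k by lia. split; [lia|split;[lia|auto]].
Qed.

Lemma valid_snoc S l g j k : valid S l -> j < length l -> k < length l ->
  nth j l (Var 0) = Imp (nth k l (Var 0)) g -> valid S (l ++ [g]).
Proof.
  intros Hv Hj Hk He i Hi. rewrite length_app in Hi; simpl in Hi.
  destruct (Nat.lt_ge_cases i (length l)) as [Hl|Hl].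
  - destruct (Hv i Hl) as [H|[H|[j' [k' [Hj' [Hk' He']]]]]]; unfold P_at.
    + left; now rewrite app_nth1.
    + right; left; now rewrite app_nth1.
    + right; right; exists j', k'. rewrite !app_nth1 by lia. auto.
  - assert (i = length l) by lia; subst i.
    right; right; exists j, k. rewrite !app_nth1 by lia.
    rewrite app_nth2 by lia. rewrite Nat.sub_diag. simpl. auto.
Qed.

Lemma D_derives S phi : D S phi -> derives S phi.
Proof.
  induction 1.
  - exists [f]; split; [congruence|split;[reflexivity|]].
    intros i Hi; simpl in Hi; assert (i = 0) by lia; subst; left; exact H.
  - exists [f]; split; [congruence|split;[reflexivity|]].
    intros i Hi; simpl in Hi; assert (i = 0) by lia; subst; right; left; exact H.
  - destruct IHD1 as [l1 [Hn1 [Hl1 Hv1]]]. destruct IHD2 as [l2 [Hn2 [Hl2 Hv2]]].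
    assert (L1 : length l1 > 0) by (destruct l1; [congruence|simpl; lia]).
    assert (L2 : length l2 > 0) by (destruct l2; [congruence|simpl; lia]).
    exists ((l1 ++ l2) ++ [g]). split; [destruct l1; simpl; congruence|split].
    + apply last_last.
    + apply (valid_snoc S (l1 ++ l2) g (length l1 - 1) (length l1 + length l2 - 1)).
      * now apply valid_app.
      * rewrite length_app; lia.
      * rewrite length_app; lia.
      * rewrite app_nth1 by lia. rewrite app_nth2 by lia.
        replace (length l1 + length l2 - 1 - length l1) with (length l2 - 1) by lia.
        rewrite <- !last_nth_eq by auto. congruence.
Qed.

Lemma D_taut S f : tautology f -> D S f.
Proof. intros; apply D_fn, FN_taut; auto. Qed.

Lemma D_mono (S S' : form -> Prop) f : (forall x, S x -> S' x) -> D S f -> D S' f.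
Proof. intros H; induction 1; [apply D_fn|apply D_hyp|eapply D_mp]; eauto. Qed.

Lemma D_ded S a f : D (fun y => S y \/ y = a) f -> D S (Imp a f).
Proof.
  induction 1.
  - apply (D_mp _ f); [apply D_taut; intro w; simpl; destruct (ceval w f), (ceval w a); auto|].
    now apply D_fn.
  - destruct H as [H|H].
    + apply (D_mp _ f); [apply D_taut; intro w; simpl; destruct (ceval w f), (ceval w a); auto|].
      now apply D_hyp.
    + subst. apply D_taut; intro w; simpl; destruct (ceval w _); auto.
  - apply (D_mp _ (Imp a f)); auto.
    apply (D_mp _ (Imp a (Imp f g))); auto.
    apply D_taut; intro w; simpl; destruct (ceval w f), (ceval w a), (ceval w g); auto.
Qed.

Lemma D_mp2 S a b c : tautology (Imp a (Imp b c)) -> D S a -> D S b -> D S c.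
Proof. intros T Ha Hb. apply (D_mp _ b); auto. apply (D_mp _ a); auto. now apply D_taut. Qed.

Definition pr (a b : nat) : nat := to_nat (a, b).

Lemma pr_inj a b c d : pr a b = pr c d -> a = c /\ b = d.
Proof.
  unfold pr; intros H. pose proof (f_equal of_nat H) as H'.
  rewrite !cancel_of_to in H'. inversion H'. auto.
Qed.

Fixpoint enc (f : form) : nat :=
  match f with
  | Var n => pr 0 n
  | Neg a => pr 1 (enc a)
  | Or a b => pr 2 (pr (enc a) (enc b))
  | And a b => pr 3 (pr (enc a) (enc b))
  | Imp a b => pr 4 (pr (enc a) (enc b))
  | Iff a b => pr 5 (pr (enc a) (enc b))
  | Tri a b => pr 6 (pr (enc a) (enc b))
  | Loop a b => pr 7 (pr (enc a) (enc b))
  end.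

Lemma enc_inj f g : enc f = enc g -> f = g.
Proof.
  revert g; induction f; destruct g; cbn [enc]; intros H;
  apply pr_inj in H; destruct H as [Ha Hb]; try discriminate;
  try (apply pr_inj in Hb; destruct Hb as [Hb1 Hb2]);
  f_equal; auto.
Qed.

Definition enum (n : nat) : form :=
  match excluded_middle_informative (exists f, enc f = n) with
  | left H => proj1_sig (constructive_indefinite_description _ H)
  | right _ => Var 0
  end.

Lemma enum_enc f : enum (enc f) = f.
Proof.
  unfold enum. destruct (excluded_middle_informative _) as [H|H].
  - destruct (constructive_indefinite_description _ H) as [g Hg]; simpl. now apply enc_inj.
  - exfalso; apply H; eauto.
Qed.

Fixpoint G (Sig : form -> Prop) (phi : form) (n : nat) : form -> Prop :=
  match n with
  | 0 => Sig
  | S n' => fun x => G Sig phi n' x \/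
      (x = enum n' /\ ~ D (fun y => G Sig phi n' y \/ y = enum n') phi) \/
      (x = Neg (enum n') /\ D (fun y => G Sig phi n' y \/ y = enum n') phi)
  end.

Lemma G_mono Sig phi n m x : n <= m -> G Sig phi n x -> G Sig phi m x.
Proof.
  induction 1; auto. intros H0; simpl; left; auto.
Qed.

Lemma G_cons Sig phi n : ~ D Sig phi -> ~ D (G Sig phi n) phi.
Proof.
  intros H0; induction n; simpl; auto.
  set (e := enum n).
  destruct (classic (D (fun y => G Sig phi n y \/ y = e) phi)) as [Hd|Hd].
  - intros Hc. apply IHn.
    assert (Hc' : D (fun y => G Sig phi n y \/ y = Neg e) phi).
    { eapply D_mono; [|exact Hc]. intros x [Hx|[[Hx Hx']|[Hx Hx']]]; auto. contradiction. }
    apply D_ded in Hd. apply D_ded in Hc'.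
    eapply D_mp2; [|exact Hd|exact Hc'].
    intro w; simpl; destruct (ceval w e), (ceval w phi); auto.
  - intros Hc. apply Hd. eapply D_mono; [|exact Hc].
    intros x [Hx|[[Hx Hx']|[Hx Hx']]]; auto. contradiction.
Qed.

Definition Gam Sig phi : form -> Prop := fun x => exists n, G Sig phi n x.

Lemma D_compact Sig phi f : D (Gam Sig phi) f -> exists n, D (G Sig phi n) f.
Proof.
  induction 1.
  - exists 0; now apply D_fn.
  - destruct H as [n Hn]; exists n; now apply D_hyp.
  - destruct IHD1 as [n1 H1], IHD2 as [n2 H2]. exists (max n1 n2).
    apply (D_mp _ f).
    + eapply D_mono; [|exact H1]. intros; eapply G_mono; [|eauto]; lia.
    + eapply D_mono; [|exact H2]. intros; eapply G_mono; [|eauto]; lia.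
Qed.

Lemma Gam_cons Sig phi : ~ D Sig phi -> ~ D (Gam Sig phi) phi.
Proof.
  intros H0 Hc. apply D_compact in Hc. destruct Hc as [n Hn].
  eapply G_cons; eauto.
Qed.

Lemma Gam_compl Sig phi f : Gam Sig phi f \/ Gam Sig phi (Neg f).
Proof.
  destruct (classic (D (fun y => G Sig phi (enc f) y \/ y = enum (enc f)) phi)) as [Hd|Hd].
  - right. exists (S (enc f)). simpl. right; right. rewrite enum_enc in *. auto.
  - left. exists (S (enc f)). simpl. right; left. rewrite enum_enc in *. auto.
Qed.

Lemma Gam_incl Sig phi x : Sig x -> Gam Sig phi x.
Proof. intros; exists 0; auto. Qed.

Definition sgn (w : form -> bool) (f : form) : form := if ceval w f then f else Neg f.

Lemma sgn_key w w' f : ceval w' (sgn w f) = true <-> ceval w' f = ceval w f.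
Proof. unfold sgn; destruct (ceval w f); simpl; destruct (ceval w' f); simpl; intuition congruence. Qed.

Lemma taut_un w a (op : form -> form) (bop : bool -> bool)
  (Hop : forall w' x, ceval w' (op x) = bop (ceval w' x)) :
  tautology (Imp (sgn w a) (sgn w (op a))).
Proof.
  intro w'; simpl. destruct (ceval w' (sgn w a)) eqn:E1; auto. simpl.
  apply sgn_key in E1. apply sgn_key. rewrite !Hop, E1. auto.
Qed.

Lemma taut_bin w a b (op : form -> form -> form) (bop : bool -> bool -> bool)
  (Hop : forall w' x y, ceval w' (op x y) = bop (ceval w' x) (ceval w' y)) :
  tautology (Imp (sgn w a) (Imp (sgn w b) (sgn w (op a b)))).
Proof.
  intro w'; simpl. destruct (ceval w' (sgn w a)) eqn:E1; auto. simpl.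
  destruct (ceval w' (sgn w b)) eqn:E2; auto. simpl.
  apply sgn_key in E1. apply sgn_key in E2. apply sgn_key. rewrite !Hop, E1, E2. auto.
Qed.

Lemma truth_max (Gm : form -> Prop) (phi : form) :
  ~ D Gm phi -> (forall f, D Gm f \/ D Gm (Neg f)) ->
  forall f, ceval (fun g => bdec (D Gm g)) f = true <-> D Gm f.
Proof.
  intros Hc Hcompl.
  set (w := fun g => bdec (D Gm g)).
  assert (Hat : forall f, ceval w f = w f -> D Gm (sgn w f)).
  { intros f E. unfold sgn. rewrite E. unfold w. destruct (bdec (D Gm f)) eqn:B.
    - now apply bdec_true.
    - destruct (Hcompl f) as [H|H]; auto. apply bdec_true in H. congruence. }
  assert (Hs : forall f, D Gm (sgn w f)).
  { induction f.
    - apply Hat; reflexivity.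
    - eapply D_mp; [apply D_taut, (taut_un w f Neg negb); reflexivity|auto].
    - eapply D_mp2; [apply (taut_bin w f1 f2 Or orb); reflexivity|auto|auto].
    - eapply D_mp2; [apply (taut_bin w f1 f2 And andb); reflexivity|auto|auto].
    - eapply D_mp2; [apply (taut_bin w f1 f2 Imp implb); reflexivity|auto|auto].
    - eapply D_mp2; [apply (taut_bin w f1 f2 Iff Bool.eqb); reflexivity|auto|auto].
    - apply Hat; reflexivity.
    - apply Hat; reflexivity. }
  intros f. split.
  - intros E. specialize (Hs f). unfold sgn in Hs. fold w. rewrite E in Hs. auto.
  - intros Hf. fold w. destruct (ceval w f) eqn:E; auto. exfalso.
    specialize (Hs f). unfold sgn in Hs. rewrite E in Hs. apply Hc.
    eapply D_mp2; [|exact Hf|exact Hs]. intro w'; simpl.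
    destruct (ceval w' f), (ceval w' phi); auto.
Qed.

Definition sb (a b : form) (n : nat) : form :=
  match n with 0 => a | 1 => b | _ => Var n end.

Section Model.
Variable w : form -> bool.
Hypothesis Hw : forall f, FN f -> ceval w f = true.

Definition mv (n : nat) : bool := w (Var n).
Definition mR (a b : form) : Prop :=
  w (Loop a b) = true \/
  (ceval w a = true /\ ceval w b = false /\ w (Loop (Neg a) b) = true).

Lemma inst f a b : FN f -> ceval w (subst (sb a b) f) = true.
Proof. intros; apply Hw, FN_subst; auto. Qed.

Lemma model_truth f : sat mv mR f <-> ceval w f = true.
Proof.
  induction f; cbn [sat ceval].
  - unfold mv; tauto.
  - rewrite IHf; destruct (ceval w f); simpl; intuition congruence.
  - rewrite IHf1, IHf2, orb_true_iff; tauto.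
  - rewrite IHf1, IHf2, andb_true_iff; tauto.
  - rewrite IHf1, IHf2; destruct (ceval w f1), (ceval w f2); simpl; intuition congruence.
  - rewrite IHf1, IHf2; destruct (ceval w f1), (ceval w f2); simpl; intuition congruence.
  - rewrite IHf1, IHf2. pose proof (inst _ f1 f2 FN_F2) as H2. simpl in H2.
    unfold mR. destruct (ceval w f1), (ceval w f2), (w (Tri f1 f2)), (w (Loop f1 f2));
      simpl in *; intuition congruence.
  - rewrite IHf1, IHf2. pose proof (inst _ f1 f2 FN_F1) as H1. simpl in H1.
    unfold mR. destruct (ceval w f1), (ceval w f2), (w (Loop f1 f2));
      simpl in *; intuition congruence.
Qed.

Lemma model_Rn : Rn mR.
Proof.
  intros a b H. pose proof (inst _ a b FN_N1) as H1. pose proof (inst _ a b FN_N2) as H2.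
  simpl in H1, H2. unfold mR in *. simpl in H.
  destruct (ceval w a), (ceval w b), (w (Loop a b)), (w (Loop (Neg a) b)),
    (w (Loop (Neg (Neg a)) b)); simpl in *; intuition congruence.
Qed.
End Model.

Theorem mainTheorem17 :
  forall (Sigma : form -> Prop) (phi : form),
    derives Sigma phi <-> sem_cons Rn Sigma phi.
Proof.
  intros Sig phi. split.
  - intros H. apply D_sound, derives_D, H.
  - intros Hs. apply D_derives. apply NNPP. intros Hn.
    set (Gm := Gam Sig phi).
    assert (Hc : ~ D Gm phi) by (apply Gam_cons; auto).
    assert (Hcompl : forall f, D Gm f \/ D Gm (Neg f)).
    { intros f; destruct (Gam_compl Sig phi f); [left|right]; now apply D_hyp. }
    pose proof (truth_max Gm phi Hc Hcompl) as T.
    set (w := fun g => bdec (D Gm g)) in T.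
    assert (Hw : forall f, FN f -> ceval w f = true) by (intros; apply T, D_fn; auto).
    apply Hc, T. apply (model_truth w Hw).
    apply Hs; [apply model_Rn; auto|].
    intros s Hsig. apply (model_truth w Hw), T, D_hyp, Gam_incl, Hsig.
Qed.
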